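(* Let $A=(a_{ij})\in\mathbb R^{d\times d}_+$ have entries summing to $1$ and positive row sums $r(A)_i=\sum_ja_{ij}$, and let $p\in\Sigma_d$. Define $\tilde A\in\mathbb R^{d\times d}_+$ by $\tilde A_{ij}=\frac1z a_{ij}\sqrt{p_i/r(A)_i}$, where $z>0$ is chosen so that the entries of $\tilde A$ sum to $1$. Then $\|c(\tilde A)-c(A)\|_1\le\|r(\tilde A)-r(A)\|_1$.
   Context: For a matrix $M$, $r(M)$ is its vector of row sums and $c(M)$ its vector of column sums; $\Sigma_d$ is the probability simplex in $\mathbb R^d$; $\|\cdot\|_1$ is the $\ell_1$ norm. *)

(* Defs.v *)
From mathcomp Require Import all_boot all_order all_algebra.
Set Implicit Arguments. Unset Strict Implicit. Unset Printing Implicit Defensive.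
Import Order.TTheory GRing.Theory Num.Theory.
Local Open Scope ring_scope.

Definition rowsums (R : pzRingType) (d : nat) (M : 'M[R]_d) : 'I_d -> R :=
  fun i => \sum_(j < d) M i j.
Definition colsums (R : pzRingType) (d : nat) (M : 'M[R]_d) : 'I_d -> R :=
  fun j => \sum_(i < d) M i j.

Definition l1 (R : numDomainType) (d : nat) (v : 'I_d -> R) : R :=
  \sum_(i < d) `|v i|.

Definition in_simplex (R : numDomainType) (d : nat) (p : 'I_d -> R) : Prop :=
  (forall i, 0 <= p i) /\ \sum_(i < d) p i = 1.

Definition Araw (R : rcfType) (d : nat) (A : 'M[R]_d) (p : 'I_d -> R) : 'M[R]_d :=
  \matrix_(i, j) (A i j * Num.sqrt (p i / rowsums A i)).

Definition zconst (R : rcfType) (d : nat) (A : 'M[R]_d) (p : 'I_d -> R) : R :=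
  \sum_(i < d) \sum_(j < d) Araw A p i j.

Definition Atilde (R : rcfType) (d : nat) (A : 'M[R]_d) (p : 'I_d -> R) : 'M[R]_d :=
  \matrix_(i, j) (Araw A p i j / zconst A p).

(* Main.v *)
Require Import Defs.
From mathcomp Require Import all_boot all_order all_algebra.
Import Order.TTheory GRing.Theory Num.Theory.
Local Open Scope ring_scope.

Theorem lemma6 (R : rcfType) (d : nat) (A : 'M[R]_d) (p : 'I_d -> R) :
  (forall i j, 0 <= A i j) ->
  \sum_(i < d) \sum_(j < d) A i j = 1 ->
  (forall i, 0 < rowsums A i) ->
  in_simplex p ->
  l1 (fun j => colsums (Atilde A p) j - colsums A j)
    <= l1 (fun i => rowsums (Atilde A p) i - rowsums A i).
Proof.
move=> A0 _ _ _.
pose t i := Num.sqrt (p i / rowsums A i) / zconst A p.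
have HA : forall i j, Atilde A p i j = A i j * t i.
  by move=> i j; rewrite /Atilde /Araw !mxE /t mulrA.
have Hc : forall j, colsums (Atilde A p) j - colsums A j
    = \sum_(i < d) A i j * (t i - 1).
  move=> j; rewrite /colsums -sumrB; apply: eq_bigr => i _.
  by rewrite HA mulrBr mulr1.
have Hr : forall i, rowsums (Atilde A p) i - rowsums A i
    = rowsums A i * (t i - 1).
  move=> i; rewrite /rowsums -sumrB mulr_suml; apply: eq_bigr => j _.
  by rewrite HA mulrBr mulr1.
rewrite /l1.
under eq_bigr => j _ do rewrite Hc.
under [X in _ <= X]eq_bigr => i _ do rewrite Hr.
apply: le_trans (_ : _ <= \sum_(j < d) \sum_(i < d) A i j * `|t i - 1|) _.
  apply: ler_sum => j _; apply: le_trans (ler_norm_sum _ _ _) _.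
  by apply: ler_sum => i _; rewrite normrM ger0_norm.
rewrite exchange_big /=; apply: ler_sum => i _.
rewrite normrM ger0_norm; last by apply: sumr_ge0 => j _.
by rewrite /rowsums mulr_suml.
Qed.
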